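(* Let $X(s,t)=\gamma(s)+\frac{t}{\sqrt2}\bigl(V_2(s)+V_4(s)\bigr)$, $(s,t)\in I\times J$, and suppose $\kappa_2=\kappa_3$ on $I$ and $1-\frac{t}{\sqrt2}\kappa_1(s)\neq0$ on $I\times J$ (so $X$ is an immersion). Then $X$ is flat (its Gaussian curvature vanishes identically) and has flat normal bundle (its normal curvature vanishes identically).
   Context: Let $I,J\subset\mathbb{R}$ be open intervals and $\gamma:I\to\mathbb{R}^4$ a smooth unit-speed curve equipped with a smooth orthonormal frame $(V_1,V_2,V_3,V_4)$ along $\gamma$ and smooth functions $\kappa_1,\kappa_2,\kappa_3:I\to\mathbb{R}$ satisfying the Frenet equations $\gamma'=V_1$, $V_1'=\kappa_1V_2$, $V_2'=-\kappa_1V_1+\kappa_2V_3$, $V_3'=-\kappa_2V_2+\kappa_3V_4$, $V_4'=-\kappa_3V_3$. The normal curvature of a surface in $\mathbb{R}^4$ with orthonormal tangent frame $e_1,e_2$ and orthonormal normal frame $N_1,N_2$ is $K_N=\sum_{j=1}^{2}(h^1_{1j}h^2_{2j}-h^2_{1j}h^1_{2j})$ with $h^k_{ij}=\langle h(e_i,e_j),N_k\rangle$, $h$ the second fundamental form. *)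

(* Defs.v *)
From Stdlib Require Import Reals.
Open Scope R_scope.

Record Vec4 := mkV4 { c1 : R; c2 : R; c3 : R; c4 : R }.

Definition vadd (u v : Vec4) : Vec4 :=
  mkV4 (c1 u + c1 v) (c2 u + c2 v) (c3 u + c3 v) (c4 u + c4 v).
Definition vscale (a : R) (v : Vec4) : Vec4 :=
  mkV4 (a * c1 v) (a * c2 v) (a * c3 v) (a * c4 v).
Definition vdot (u v : Vec4) : R :=
  c1 u * c1 v + c2 u * c2 v + c3 u * c3 v + c4 u * c4 v.

Definition vderiv (f : R -> Vec4) (x : R) (v : Vec4) : Prop :=
  derivable_pt_lim (fun u => c1 (f u)) x (c1 v) /\
  derivable_pt_lim (fun u => c2 (f u)) x (c2 v) /\
  derivable_pt_lim (fun u => c3 (f u)) x (c3 v) /\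
  derivable_pt_lim (fun u => c4 (f u)) x (c4 v).

Definition is_open_interval (I : R -> Prop) : Prop :=
  (exists x, I x) /\
  (forall x y z, I x -> I z -> x <= y <= z -> I y) /\
  (forall x, I x -> exists e, 0 < e /\ forall y, Rabs (y - x) < e -> I y).

Definition smooth_on (I : R -> Prop) (f : R -> R) : Prop :=
  exists D : nat -> R -> R,
    (forall x, I x -> D O x = f x) /\
    (forall n x, I x -> derivable_pt_lim (D n) x (D (S n) x)).

Definition vsmooth_on (I : R -> Prop) (f : R -> Vec4) : Prop :=
  exists D : nat -> R -> Vec4,
    (forall x, I x -> D O x = f x) /\
    (forall n x, I x -> vderiv (D n) x (D (S n) x)).

Definition orthonormal4 (v1 v2 v3 v4 : Vec4) : Prop :=
  vdot v1 v1 = 1 /\ vdot v2 v2 = 1 /\ vdot v3 v3 = 1 /\ vdot v4 v4 = 1 /\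
  vdot v1 v2 = 0 /\ vdot v1 v3 = 0 /\ vdot v1 v4 = 0 /\
  vdot v2 v3 = 0 /\ vdot v2 v4 = 0 /\ vdot v3 v4 = 0.

Definition frenet (I : R -> Prop) (gamma V1 V2 V3 V4 : R -> Vec4)
  (k1 k2 k3 : R -> R) : Prop :=
  forall s, I s ->
    vderiv gamma s (V1 s) /\
    vderiv V1 s (vscale (k1 s) (V2 s)) /\
    vderiv V2 s (vadd (vscale (- k1 s) (V1 s)) (vscale (k2 s) (V3 s))) /\
    vderiv V3 s (vadd (vscale (- k2 s) (V2 s)) (vscale (k3 s) (V4 s))) /\
    vderiv V4 s (vscale (- k3 s) (V3 s)).

Definition ruled_X (gamma V2 V4 : R -> Vec4) (s t : R) : Vec4 :=
  vadd (gamma s) (vscale (t / sqrt 2) (vadd (V2 s) (V4 s))).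

Definition partials_of (X : R -> R -> Vec4) (I J : R -> Prop)
  (Xs Xt Xss Xst Xtt : R -> R -> Vec4) : Prop :=
  forall s t, I s -> J t ->
    vderiv (fun u => X u t) s (Xs s t) /\
    vderiv (fun w => X s w) t (Xt s t) /\
    vderiv (fun u => Xs u t) s (Xss s t) /\
    vderiv (fun w => Xs s w) t (Xst s t) /\
    vderiv (fun w => Xt s w) t (Xtt s t).

(** Second derivative of X applied to tangent vectors
    u = a Xs + b Xt, v = c Xs + d Xt (coordinates (a,b), (c,d)). *)
Definition d2X (Xss Xst Xtt : Vec4) (a b c d : R) : Vec4 :=
  vadd (vscale (a * c) Xss)
       (vadd (vscale (a * d + b * c) Xst) (vscale (b * d) Xtt)).

Definition adapted_frame (Xs Xt : Vec4) (a1 b1 a2 b2 : R) (N1 N2 : Vec4) : Prop :=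
  let e1 := vadd (vscale a1 Xs) (vscale b1 Xt) in
  let e2 := vadd (vscale a2 Xs) (vscale b2 Xt) in
  vdot e1 e1 = 1 /\ vdot e2 e2 = 1 /\ vdot e1 e2 = 0 /\
  vdot N1 N1 = 1 /\ vdot N2 N2 = 1 /\ vdot N1 N2 = 0 /\
  vdot N1 Xs = 0 /\ vdot N1 Xt = 0 /\ vdot N2 Xs = 0 /\ vdot N2 Xt = 0.

(** h^k_{ij} = <h(e_i,e_j), N_k> = <X_{ij-direction}, N_k> (the normal
    component of the second derivative, paired with N_k). *)
Definition hcoef (Xss Xst Xtt : Vec4) (a1 b1 a2 b2 : R) (N : Vec4)
  (i j : bool) : R :=
  let ai := if i then a1 else a2 in let bi := if i then b1 else b2 in
  let aj := if j then a1 else a2 in let bj := if j then b1 else b2 in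
  vdot (d2X Xss Xst Xtt ai bi aj bj) N.
(* convention: index 1 = true, index 2 = false *)

(** Gaussian curvature (Gauss equation):
    K = sum_k (h^k_11 h^k_22 - (h^k_12)^2). *)
Definition gauss_curv (Xss Xst Xtt : Vec4) (a1 b1 a2 b2 : R) (N1 N2 : Vec4) : R :=
  let h := hcoef Xss Xst Xtt a1 b1 a2 b2 in
  (h N1 true true * h N1 false false - h N1 true false * h N1 true false) +
  (h N2 true true * h N2 false false - h N2 true false * h N2 true false).

Definition normal_curv (Xss Xst Xtt : Vec4) (a1 b1 a2 b2 : R) (N1 N2 : Vec4) : R :=
  let h := hcoef Xss Xst Xtt a1 b1 a2 b2 in
  (h N1 true true * h N2 false true - h N2 true true * h N1 false true) +
  (h N1 true false * h N2 false false - h N2 true false * h N1 false false).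

(* Main.v *)
Require Import Defs.
From Stdlib Require Import Reals Lra.
Open Scope R_scope.
Lemma vderiv_add f g x l1 l2 : vderiv f x l1 -> vderiv g x l2 ->
  vderiv (fun u => vadd (f u) (g u)) x (vadd l1 l2).
Proof. intros (A1&A2&A3&A4) (B1&B2&B3&B4); repeat split; simpl;
  apply (derivable_pt_lim_plus (fun u => _ (f u)) (fun u => _ (g u))); auto. Qed.
Lemma vderiv_scal a f x l : vderiv f x l -> vderiv (fun u => vscale a (f u)) x (vscale a l).
Proof. intros (A1&A2&A3&A4); repeat split; simpl;
  apply (derivable_pt_lim_scal (fun u => _ (f u))); auto. Qed.
Lemma vderiv_const v x : vderiv (fun _ => v) x (mkV4 0 0 0 0).
Proof. repeat split; simpl; apply derivable_pt_lim_const. Qed.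
Lemma dlin a x : derivable_pt_lim (fun w => w / sqrt 2 * a) x (/ sqrt 2 * a).
Proof.
  replace (/ sqrt 2 * a) with ((1 * / sqrt 2 + x * 0) * a + x / sqrt 2 * 0) by ring.
  apply (derivable_pt_lim_mult (fun w => w / sqrt 2) (fun _ => a)).
  2: apply derivable_pt_lim_const.
  apply (derivable_pt_lim_mult (fun w => w) (fun _ => / sqrt 2)).
  apply derivable_pt_lim_id. apply derivable_pt_lim_const. Qed.
Lemma vderiv_lin v x : vderiv (fun w => vscale (w / sqrt 2) v) x (vscale (/ sqrt 2) v).
Proof. repeat split; simpl; apply dlin. Qed.
Lemma vderiv_uniq f x l1 l2 : vderiv f x l1 -> vderiv f x l2 -> l1 = l2.
Proof. destruct l1, l2; intros (A1&A2&A3&A4) (B1&B2&B3&B4); simpl in *.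
  f_equal; eapply uniqueness_limite; eauto. Qed.
Lemma dloc f g x l e : 0 < e -> (forall y, Rabs (y - x) < e -> f y = g y) ->
  derivable_pt_lim f x l -> derivable_pt_lim g x l.
Proof.
  intros He Hfg Hf eps Heps. destruct (Hf eps Heps) as [d Hd].
  assert (Hm : 0 < Rmin d e) by (apply Rmin_pos; [apply cond_pos|lra]).
  exists (mkposreal _ Hm). intros h Hh0 Hh. simpl in Hh.
  rewrite <- !Hfg. apply Hd; auto. eapply Rlt_le_trans; [exact Hh|apply Rmin_l].
  replace (x - x) with 0 by ring; rewrite Rabs_R0; lra.
  replace (x + h - x) with h by ring. eapply Rlt_le_trans; [exact Hh|apply Rmin_r].
Qed.
Lemma vderiv_loc f g x l e : 0 < e -> (forall y, Rabs (y - x) < e -> f y = g y) ->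
  vderiv f x l -> vderiv g x l.
Proof. intros He Hfg (A1&A2&A3&A4); repeat split;
  (eapply dloc; [exact He| |eassumption]); intros y Hy; simpl; rewrite Hfg; auto. Qed.
Lemma hcoef_eq Xss Xst Xtt a1 b1 a2 b2 N i j : vdot Xst N = 0 -> vdot Xtt N = 0 ->
  hcoef Xss Xst Xtt a1 b1 a2 b2 N i j =
  (if i then a1 else a2) * (if j then a1 else a2) * vdot Xss N.
Proof. intros HB HC. unfold hcoef. cbv zeta.
  set (a := if i then a1 else a2). set (b := if i then b1 else b2).
  set (c := if j then a1 else a2). set (d := if j then b1 else b2).
  transitivity (a * c * vdot Xss N + (a * d + b * c) * vdot Xst N + b * d * vdot Xtt N).
  { destruct Xss, Xst, Xtt, N; unfold vdot, d2X, vadd, vscale; simpl; ring. }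
  rewrite HB, HC; ring. Qed.

Theorem corollary9
  (I J : R -> Prop) (gamma V1 V2 V3 V4 : R -> Vec4) (k1 k2 k3 : R -> R) :
  is_open_interval I -> is_open_interval J ->
  vsmooth_on I gamma ->
  vsmooth_on I V1 -> vsmooth_on I V2 -> vsmooth_on I V3 -> vsmooth_on I V4 ->
  smooth_on I k1 -> smooth_on I k2 -> smooth_on I k3 ->
  (forall s, I s -> orthonormal4 (V1 s) (V2 s) (V3 s) (V4 s)) ->
  frenet I gamma V1 V2 V3 V4 k1 k2 k3 ->
  (forall s, I s -> k2 s = k3 s) ->
  (forall s t, I s -> J t -> 1 - t / sqrt 2 * k1 s <> 0) ->
  forall Xs Xt Xss Xst Xtt : R -> R -> Vec4,
    partials_of (ruled_X gamma V2 V4) I J Xs Xt Xss Xst Xtt ->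
    forall s t, I s -> J t ->
    forall (a1 b1 a2 b2 : R) (N1 N2 : Vec4),
      adapted_frame (Xs s t) (Xt s t) a1 b1 a2 b2 N1 N2 ->
      gauss_curv (Xss s t) (Xst s t) (Xtt s t) a1 b1 a2 b2 N1 N2 = 0 /\
      normal_curv (Xss s t) (Xst s t) (Xtt s t) a1 b1 a2 b2 N1 N2 = 0.
Proof.
  intros _ HJ _ _ _ _ _ _ _ _ _ Hfr Hk Hnz Xs Xt Xss Xst Xtt HP s t Is Jt
    a1 b1 a2 b2 N1 N2 HF.
  destruct HJ as (_ & _ & HJo).
  destruct (HJo t Jt) as (e & He & HJe).
  destruct (Hfr s Is) as (Dg & D1 & D2 & D3 & D4).
  set (W := vadd (vadd (vscale (- k1 s) (V1 s)) (vscale (k2 s) (V3 s))) (vscale (- k3 s) (V3 s))).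
  assert (HXs : forall w, J w -> Xs s w = vadd (V1 s) (vscale (w / sqrt 2) W)).
  { intros w Jw. destruct (HP s w Is Jw) as (P1 & _).
    eapply vderiv_uniq; [exact P1|]. unfold ruled_X.
    apply vderiv_add; auto. apply vderiv_scal. apply vderiv_add; auto. }
  assert (HXt : forall w, J w -> Xt s w = vadd (mkV4 0 0 0 0) (vscale (/ sqrt 2) (vadd (V2 s) (V4 s)))).
  { intros w Jw. destruct (HP s w Is Jw) as (_ & P2 & _).
    eapply vderiv_uniq; [exact P2|]. unfold ruled_X.
    apply vderiv_add. apply vderiv_const. apply vderiv_lin. }
  destruct (HP s t Is Jt) as (_ & _ & _ & P4 & P5).
  assert (HXst : Xst s t = vadd (mkV4 0 0 0 0) (vscale (/ sqrt 2) W)).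
  { eapply vderiv_uniq; [exact P4|]. eapply vderiv_loc; [exact He| |].
    2: { apply vderiv_add. apply vderiv_const. apply vderiv_lin. }
    intros y Hy; simpl; rewrite HXs; auto. }
  assert (HXtt : Xtt s t = mkV4 0 0 0 0).
  { eapply vderiv_uniq; [exact P5|]. eapply vderiv_loc; [exact He| |].
    2: apply (vderiv_const (vadd (mkV4 0 0 0 0) (vscale (/ sqrt 2) (vadd (V2 s) (V4 s))))).
    intros y Hy; simpl; rewrite HXt; auto. }
  assert (Horth : forall N, vdot N (Xs s t) = 0 -> vdot (Xst s t) N = 0 /\ vdot (Xtt s t) N = 0).
  { intros N HN. rewrite HXs in HN by auto.
    assert (E : vdot N (vadd (V1 s) (vscale (t / sqrt 2) W)) = (1 - t / sqrt 2 * k1 s) * vdot N (V1 s)).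
    { unfold W, vdot, vadd, vscale; simpl. rewrite (Hk s Is). ring. }
    rewrite E in HN. apply Rmult_integral in HN. destruct HN as [HN|HN].
    { exfalso; exact (Hnz s t Is Jt HN). }
    split.
    - rewrite HXst. revert HN. unfold W, vdot, vadd, vscale; simpl. rewrite (Hk s Is). intro HN.
      transitivity (- (/ sqrt 2 * k1 s) * (Defs.c1 N * Defs.c1 (V1 s) + c2 N * c2 (V1 s) + c3 N * c3 (V1 s) + c4 N * c4 (V1 s))); [ring|].
      rewrite HN; ring.
    - rewrite HXtt; unfold vdot; simpl; ring. }
  destruct HF as (_&_&_&_&_&_&HN1&_&HN2&_).
  destruct (Horth N1 HN1) as [B1 C1]. destruct (Horth N2 HN2) as [B2 C2].
  unfold gauss_curv, normal_curv; cbv zeta.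
  rewrite !(hcoef_eq _ _ _ _ _ _ _ N1 _ _ B1 C1).
  rewrite !(hcoef_eq _ _ _ _ _ _ _ N2 _ _ B2 C2).
  split; ring.
Qed.
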